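(* Let $(M,g)$ be a complete Riemannian manifold and let $V\in L^\infty_{\rm loc}(M)$ with $V\ge1$ a.e., $\operatorname{ess\,lim}_{d(p,p_0)\to\infty}V(p)=\infty$, satisfying the doubling condition. Then for every $\epsilon>0$ there exists $A=A(\epsilon)>0$ such that for all $t\in(0,2]$, $$\int_{\{x\in M:V(x)\ge A/t\}}e^{-tV(x)}\,dx\le\epsilon\int_M e^{-tV(x)}\,dx.$$
   Context: $d$ is the Riemannian distance, $p_0\in M$ fixed, $dx$ and $|\cdot|$ the Riemannian measure. $\operatorname{ess\,lim}V=\infty$ means: for every $L>0$ there is $R>0$ with $V(p)\ge L$ for a.e. $p$ with $d(p,p_0)\ge R$. Doubling condition: with $\sigma(\lambda)=|\{x:V(x)\le\lambda\}|$, there are $C_V,\lambda_0>0$ with $\sigma(2\lambda)\le C_V\sigma(\lambda)$ for all $\lambda\ge\lambda_0$. *)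

(* Defs.v *)
From HB Require Import structures.
From mathcomp Require Import all_boot all_order all_algebra.
From mathcomp Require Import all_classical all_reals all_analysis.
Set Implicit Arguments. Unset Strict Implicit. Unset Printing Implicit Defensive.
Import Order.TTheory GRing.Theory Num.Theory.
Local Open Scope classical_set_scope.
Local Open Scope ring_scope.

(* The underlying "manifold" is modelled as a measure space (M, mu) equipped
   with a distance d. *)

Section Defs.
Context (disp : measure_display) (M : measurableType disp) (R : realType).
Variable mu : {measure set M -> \bar R}.

Definition sublevel_measure (V : M -> R) (lambda : R) : \bar R :=
  mu [set x | V x <= lambda].

Definition doubling_potential (V : M -> R) : Prop :=
  exists CV lambda0 : R, 0 < CV /\ 0 < lambda0 /\
    forall lambda, lambda0 <= lambda ->
      (sublevel_measure V (2 * lambda) <= CV%:E * sublevel_measure V lambda)%E.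

Definition ess_lim_infty (d : M -> M -> R) (p0 : M) (V : M -> R) : Prop :=
  forall L : R, 0 < L -> exists Rad : R, 0 < Rad /\
    {ae mu, forall p, Rad <= d p p0 -> L <= V p}.

Definition Linf_loc (d : M -> M -> R) (p0 : M) (V : M -> R) : Prop :=
  measurable_fun setT V /\
  forall Rad : R, exists K : R, {ae mu, forall p, d p p0 <= Rad -> `|V p| <= K}.
End Defs.

(* Main.v *)
Require Import Defs.
From HB Require Import structures.
From mathcomp Require Import all_boot all_order all_algebra.
From mathcomp Require Import all_classical all_reals all_analysis.
Import Order.TTheory GRing.Theory Num.Theory.
Local Open Scope classical_set_scope.
Local Open Scope ring_scope.
From mathcomp Require Import ring lra measurable_realfun.

Lemma pow2_ge (R : realType) (k : nat) : (k.+1)%:R <= (2:R)^+k.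
Proof.
have h := ltn_expl k (isT : 1 < 2)%N.
have : ((k.+1)%:R <= (2 ^ k)%:R :> R) by rewrite ler_nat.
by rewrite natrX.
Qed.

Lemma term_bound (R : realType) (C l eps : R) (n : nat) :
  1 <= C -> 0 < eps -> 2 * C <= l -> 2 * C ^+ 2 / eps <= l ->
  expR (- (2 ^+ n.+1 * l)) * C ^+ n.+2 <= eps * expR (- l) / (2 ^ n.+1)%:R.
Proof.
move=> C1 e0 hl1 hl2.
have l0 : 0 < l by nra.
set u := expR (- l).
have u0 : 0 < u by exact: expR_gt0.
have ul : u * l <= 1.
  rewrite /u expRN; have := expR_ge1Dx l; have := expR_gt0 l => h1 h2.
  rewrite mulrC -ler_pdivlMr ?invr_gt0 // invrK; nra.
have h1 : expR (- (2 ^+ n.+1 * l)) <= u ^+ n.+2.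
  rewrite /u -expRM_natl ler_expR.
  have := pow2_ge R n.+1; nra.
have h2 : (C * u) ^+ n * 2 ^+ n <= 1.
  rewrite -exprMn; apply: exprn_ile1; nra.
have e2 : C ^+ 2 <= eps / 2 * l.
  move: hl2; rewrite ler_pdivrMr // => h; nra.
have h3 : C * u * (C * u) <= eps / 2 * u.
  have := ler_wpM2r (ltW (mulr_gt0 u0 u0)) e2.
  rewrite expr2 => h.
  have : eps / 2 * l * (u * u) <= eps / 2 * u.
    have e20 : 0 < eps / 2 by apply: divr_gt0.
    rewrite -mulrA; apply: ler_wpM2l; first exact: ltW.
    nra.
  nra.
have p0 : 0 < (2:R) ^+ n by apply: exprn_gt0.
have a0 : 0 <= (C * u) ^+ n by apply: exprn_ge0; nra.
have Cn0 : 0 <= C ^+ n.+2 by apply: exprn_ge0; nra.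
apply: (le_trans (ler_wpM2r Cn0 h1)).
have E : u ^+ n.+2 * C ^+ n.+2 = (C*u)^+n * (C*u*(C*u)).
  by rewrite -exprMn (mulrC u C) !exprS; ring.
rewrite E natrX [in X in _ <= X]exprS.
rewrite ler_pdivlMr; last by nra.
nra.
Qed.

Lemma pow2_ge1 (R : realType) (k : nat) : (k.+1)%:R <= (2:R)^+k.+1.
Proof.
have h := ltn_expl k.+1 (isT : 1 < 2)%N.
have : ((k.+1)%:R <= (2 ^ k.+1)%:R :> R) by rewrite ler_nat ltnW.
by rewrite natrX.
Qed.

Lemma dyadic_exists (R : realType) (s x : R) : 0 < s -> 2 * s <= x ->
  exists n : nat, 2^+(n.+1) * s <= x /\ x <= 2^+(n.+2) * s.
Proof.
move=> s0 hx.
have ind : forall k : nat, x <= 2^+(k.+1) * s ->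
    exists n : nat, 2^+(n.+1) * s <= x /\ x <= 2^+(n.+2) * s.
  elim=> [|k IH] hk.
    exists 0%N; split; rewrite ?expr1 //.
    rewrite expr1 in hk; rewrite exprS expr1; nra.
  have [hle|hlt] := leP x (2^+(k.+1) * s); first exact: IH.
  by exists k; split => //; exact: ltW.
have x0 : 0 <= x / s by apply: divr_ge0 => //; nra.
have hb := archi_boundP x0.
set k := Num.bound (x / s) in hb.
apply: (ind k).
have := pow2_ge1 R k.
have e : x = (x/s)*s by rewrite divfK // gt_eqF.
rewrite -[k.+1]addn1 natrD => h2.
rewrite e; nra.
Qed.

Theorem proposition3p5 (disp : measure_display) (M : measurableType disp)
  (R : realType) (mu : {measure set M -> \bar R})
  (d : M -> M -> R) (p0 : M) (V : M -> R)
  (* metric axioms for d *)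
  (d_refl : forall x, d x x = 0)
  (d_sym : forall x y, d x y = d y x)
  (d_tri : forall x y z, d x z <= d x y + d y z)
  (d_sep : forall x y, d x y = 0 -> x = y)
  (* distance to p0 is measurable, and bounded sets have finite measure
     (Hopf-Rinow for a complete Riemannian manifold) *)
  (d_meas : measurable_fun setT (fun x => d x p0))
  (balls_finite : forall Rad : R, (mu [set x | (d x p0 <= Rad)%R] < +oo)%E)
  (* hypotheses on V *)
  (hVloc : Linf_loc mu d p0 V)
  (hV1 : {ae mu, forall x, 1 <= V x})
  (hVlim : ess_lim_infty mu d p0 V)
  (hVdoub : doubling_potential mu V) :
  forall eps : R, 0 < eps -> exists A : R, 0 < A /\
    forall t : R, 0 < t -> t <= 2 ->
      (\int[mu]_(x in [set x | (A / t <= V x)%R]) (expR (- (t * V x)))%:E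
        <= eps%:E * \int[mu]_(x in [set: M]) (expR (- (t * V x)))%:E)%E.
Proof.
move=> eps e0.
case: hVloc => mV _.
case: hVdoub => C [l0 [C0 [l00 hD]]].
rewrite /sublevel_measure in hD.
set C' := C + 1.
have C'1 : 1 <= C' by rewrite /C'; lra.
set l1 := 2 * l0 + 2 + 2 * C' + 2 * C' ^+ 2 / eps.
have hC2 : 0 <= 2 * C' ^+ 2 / eps.
  by apply: divr_ge0 => //; [apply: mulr_ge0 => //; apply: exprn_ge0; lra | lra].
have l1pos : 0 < l1 by rewrite /l1; lra.
exists (2 * l1); split; first lra.
move=> t t0 t2.
set s := l1 / t.
have s0 : 0 < s by apply: divr_gt0.
have ts : t * s = l1 by rewrite /s mulrC divfK // gt_eqF.
have sl0 : l0 <= s.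
  have : t * s <= 2 * s by apply: ler_wpM2r => //; exact: ltW.
  have : 2 * l0 <= l1 by rewrite /l1; lra.
  lra.
have mS : forall a, measurable [set x | V x <= a].
  move=> a.
  suff -> : [set x | V x <= a] = V @^-1` `]-oo, a] by rewrite -(setTI (V @^-1` _)); apply: mV.
  by apply/seteqP; split => x /=; rewrite in_itv /=.
have mG : forall a, measurable [set x | a <= V x].
  move=> a.
  suff -> : [set x | a <= V x] = V @^-1` `[a, +oo[ by rewrite -(setTI (V @^-1` _)); apply: mV.
  by apply/seteqP; split => x /=; rewrite in_itv /= andbT.
have mf : measurable_fun [set: M] (fun x => (expR (- (t * V x)))%:E : \bar R).
  apply/measurable_EFinP; apply: measurableT_comp => //.
  apply: measurable_funN; apply: measurable_funM => //.
set sig := fun a => mu [set x | V x <= a].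
have sig0 : forall a, (0 <= sig a)%E by move=> a; exact: measure_ge0.
have hDn : forall n : nat, (sig (2 ^+ n * s)%R <= (C' ^+ n)%R%:E * sig s)%E.
  elim=> [|n IH]; first by rewrite !expr0 mul1r mul1e.
  have p1 : 1 <= (2:R) ^+ n by apply: exprn_ege1; lra.
  have e : (2 ^+ n.+1 * s = 2 * (2 ^+ n * s))%R by rewrite exprS mulrA.
  rewrite {1}/sig e.
  have h := hD (2 ^+ n * s)%R.
  apply: (le_trans (h _)); first nra.
  rewrite exprS EFinM -muleA.
  apply: (@le_trans _ _ (C'%:E * sig (2 ^+ n * s)%R)%E).
    by apply: lee_wpmul2r => //; rewrite lee_fin /C'; lra.
  apply: lee_wpmul2l; first by rewrite lee_fin; lra.
  exact: IH.
have hlow : ((expR (- l1))%:E * sig s <=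
    \int[mu]_(x in [set: M]) (expR (- (t * V x)))%:E)%E.
  apply: (@le_trans _ _ (\int[mu]_(x in [set x | (V x <= s)%R]) (expR (- (t * V x)))%:E)%E); last first.
    by apply: ge0_subset_integral => // x _; rewrite lee_fin ltW // expR_gt0.
  rewrite -(integral_cst mu (mS s)).
  apply: ge0_le_integral => //.
  - by move=> x _; rewrite lee_fin ltW // expR_gt0.
  - by apply: measurable_funS mf.
  - move=> x /= hx; rewrite lee_fin ler_expR lerN2 -ts.
    by apply: ler_wpM2l => //; exact: ltW.
have eA : (2 * l1 / t = 2 * s)%R by rewrite /s mulrA.
rewrite eA.
set D := [set x | (2 * s <= V x)%R].
have mD : measurable D by exact: (mG (2 * s)%R).
set A := fun n : nat => [set y | (V y <= 2 ^+ n.+2 * s)%R].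
set g := fun (n : nat) (x : M) => (expR (- (2 ^+ n.+1 * l1)) * \1_(A n) x)%:E.
have mg : forall n, measurable_fun [set: M] (g n).
  by move=> n; apply/measurable_EFinP; apply: measurable_funM => //; apply: measurable_indic; exact: mS.
have g0 : forall n x, (0 <= g n x)%E.
  move=> n x; rewrite lee_fin; apply: mulr_ge0; first exact: ltW (expR_gt0 _).
  by rewrite indicE; case: (x \in A n).
have hU1 : (\int[mu]_(x in D) (expR (- (t * V x)))%:E <=
     \int[mu]_(x in D) (\sum_(n <oo) g n x))%E.
  apply: ge0_le_integral => //.
  - exact: measurable_funS mf.
  - apply: (emeasurable_fun_cvg (fun m x => \sum_(0 <= n < m) g n x)%E).
      by move=> m; apply: emeasurable_sum => n; exact: measurable_funS (mg n).
    move=> x _; apply: is_cvg_nneseries => n _ _; exact: g0.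
  - move=> x Dx.
    have [n [h1 h2]] := @dyadic_exists R s (V x) s0 Dx.
    apply: (@le_trans _ _ (\sum_(0 <= i < n.+1) g i x)%E); last first.
      by apply: nneseries_lim_ge => i _ _; exact: g0.
    rewrite big_nat_recr //=.
    apply: lee_paddl; first by apply: sume_ge0 => i _; exact: g0.
    rewrite /g indicE mem_set // mulr1 lee_fin ler_expR lerN2 -ts.
    rewrite mulrCA; apply: ler_wpM2l => //; exact: ltW.
have hU2 : (\int[mu]_(x in D) (\sum_(n <oo) g n x) =
    \sum_(n <oo) \int[mu]_(x in D) g n x)%E.
  apply: integral_nneseries => //.
  by move=> n; exact: measurable_funS (mg n).
have hU3 : forall n, (\int[mu]_(x in D) g n x <=
    (expR (- (2 ^+ n.+1 * l1)))%:E * sig (2 ^+ n.+2 * s)%R)%E.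
  move=> n.
  have mA : measurable (A n) by exact: mS.
  apply: (@le_trans _ _ (\int[mu]_(x in [set: M]) g n x)%E).
    by apply: ge0_subset_integral => // x _; exact: g0.
  rewrite (integralZl_indic _ (fun=> A n)) //; last first.
    by move=> h; have := expR_gt0 (- (2 ^+ n.+1 * l1)); rewrite ltNge (ltW h).
  by rewrite integral_indic // setIT.
have hU4 : forall n : nat, ((expR (- (2 ^+ n.+1 * l1)))%:E * sig (2 ^+ n.+2 * s)%R <=
    (eps * expR (- l1) / (2 ^ n.+1)%:R)%:E * sig s)%E.
  move=> n.
  apply: (le_trans (lee_wpmul2l _ (hDn n.+2))); first by rewrite lee_fin ltW // expR_gt0.
  rewrite muleA -EFinM.
  apply: lee_wpmul2r => //; rewrite lee_fin.
  apply: term_bound => //; rewrite /l1; lra.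
apply: (le_trans hU1); rewrite hU2.
apply: (@le_trans _ _ (\sum_(n <oo) ((eps * expR (- l1) / (2 ^ n.+1)%:R)%:E * sig s))%E).
  apply: lee_nneseries => [n _ _|n _].
    by apply: integral_ge0 => x _; exact: g0.
  exact: le_trans (hU3 n) (hU4 n).
have hs := sig0 s.
move: hs hlow; case: (sig s) => [r| |] //= hs hlow.
  have -> : (\sum_(n <oo) ((eps * expR (- l1) / (2 ^ n.+1)%:R)%:E * r%:E) =
      r%:E * \sum_(n <oo) (eps * expR (- l1) / (2 ^ n.+1)%:R)%:E)%E.
    rewrite -nneseriesZl; last first.
      move=> n _; rewrite lee_fin; apply: divr_ge0 => //.
      by apply: mulr_ge0; [exact: ltW | exact: ltW (expR_gt0 _)].
    by apply: eq_eseriesr => n _; rewrite muleC.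
  have ee : (0 <= eps * expR (- l1))%R.
    by apply: mulr_ge0; [exact: ltW | exact: ltW (expR_gt0 _)].
  apply: (le_trans (lee_wpmul2l hs (epsilon_trick0 _ ee))).
  have -> : (r%:E * (eps * expR (- l1))%:E = eps%:E * ((expR (- l1))%:E * r%:E))%E.
    by rewrite -!EFinM; congr (_%:E); ring.
  by apply: lee_wpmul2l => //; rewrite lee_fin ltW.
rewrite gt0_muley ?lte_fin ?expR_gt0 // in hlow.
move: hlow; rewrite leye_eq => /eqP ->.
by rewrite gt0_muley ?lte_fin // leey.
Qed.
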